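(* Let $\lambda$ be a partition with $n$ parts and let $\beta \in U_\lambda(n)$. If $\beta \notin UBP_\lambda(n)$, then the terminal pair $(\lambda,\beta)$ is not nonpermutable; i.e. there is a permutation $\pi \neq (1,\dots,n)$ of $[n]$ with $\mathcal{LD}_\lambda(\beta;\pi) \neq \emptyset$.
   Context: Fix an integer $n \geq 1$ and write $[k] = \{1,\dots,k\}$. A partition is $\lambda = (\lambda_1,\dots,\lambda_n)$ with $\lambda_1 \geq \dots \geq \lambda_n \geq 0$ integers. Let $R_\lambda \subseteq [n-1]$ be the set of $q \in [n-1]$ with $\lambda_q > \lambda_{q+1}$; write its elements $q_1 < \dots < q_r$, and set $q_0 := 0$, $q_{r+1} := n$. For $h \in [r+1]$ the $h$-th carrel is the index interval $\{q_{h-1}+1,\dots,q_h\}$. A $\lambda$-tuple is an $n$-tuple $\beta$ with entries in $[n]$, considered with this carrel structure; it is upper if $\beta_i \geq i$ for all $i$. $U_\lambda(n)$ is the set of upper $\lambda$-tuples. Critical indices: for $\beta \in U_\lambda(n)$ and $h \in [r+1]$, set $x_1 := q_h$; given $x_{u-1}$, if some index $x$ with $q_{h-1} < x < x_{u-1}$ satisfies $\beta_{x_{u-1}} - \beta_x > x_{u-1} - x$, let $x_u$ be the largest such $x$, otherwise stop. The $x_u$ are the critical indices of $\beta$ in carrel $h$. For $i \in [n]$ let $x(i)$ be the smallest critical index in the carrel of $i$ with $x(i) \geq i$. The $\lambda$-platform is $\Xi_\lambda(\beta) := \xi$ with $\xi_i := \beta_{x(i)}$. $UBP_\lambda(n)$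 is the set of $\beta \in U_\lambda(n)$ with $\beta_i \leq \Xi_\lambda(\beta)_i$ for all $i$. Lattice paths: lattice points are integer pairs $(a,b)$ with $a \geq 0$, $b \geq 1$. A lattice path is a sequence of lattice points each consecutive step of which is $(a,b) \to (a+1,b)$ (easterly) or $(a,b) \to (a,b+1)$ (southerly). An $n$-path is $(\Lambda_1,\dots,\Lambda_n)$ with $\Lambda_m$ a lattice path starting at $(n-m,m)$. The terminals of $(\lambda,\beta)$ are $P_m := (\lambda_m + n - m, \beta_m)$, $m \in [n]$. For a permutation $\pi$ of $[n]$, $\mathcal{LD}_\lambda(\beta;\pi)$ is the set of $n$-paths with $\Lambda_m$ ending at $P_{\pi_m}$ for every $m$ and with no two distinct components sharing a lattice point. The pair $(\lambda,\beta)$ is nonpermutable if $\mathcal{LD}_\lambda(\beta;\pi) = \emptyset$ for every permutation $\pi \neq (1,\dots,n)$. *)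

(* Defs.v *)
(* All objects are 1-based, as in the paper:
   lam, beta : nat -> nat, only the values at indices 1..n matter. *)
From mathcomp Require Import all_boot.
Set Implicit Arguments. Unset Strict Implicit. Unset Printing Implicit Defensive.

Definition is_partition (n : nat) (lam : nat -> nat) : Prop :=
  forall i, 1 <= i -> i < n -> lam i.+1 <= lam i.

Definition upper_tuple (n : nat) (beta : nat -> nat) : Prop :=
  forall i, 1 <= i <= n -> i <= beta i /\ beta i <= n.

(* q in R_lam iff q in [n-1] and lam_q > lam_{q+1}. *)
(* lower end q_{h-1} of the carrel containing i (0 if none). *)
Definition carrel_lo (lam : nat -> nat) (i : nat) : nat :=
  \max_(q < i | (0 < q) && (lam q.+1 < lam q)) q.

(* upper end q_h of the carrel containing i (n if none). *)
Definition carrel_hi (n : nat) (lam : nat -> nat) (i : nat) : nat :=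
  \big[minn/n]_(i <= q < n | lam q.+1 < lam q) q.

Definition next_crit (beta : nat -> nat) (lo y : nat) : option nat :=
  let P := fun x => beta x + (y - x) < beta y in
  let cands := iota lo.+1 (y - lo.+1) in
  if has P cands then Some (last 0 (filter P cands)) else None.

(* the sequence x_1 = y, x_2, ... of critical indices
   (fuel f; the chain strictly decreases and stays above lo, so fuel y suffices) *)
Fixpoint crit_chain (beta : nat -> nat) (lo y f : nat) : seq nat :=
  y :: (if f is f'.+1 then
          (if next_crit beta lo y is Some x then crit_chain beta lo x f' else [::])
        else [::]).

Definition crit_indices (n : nat) (lam beta : nat -> nat) (i : nat) : seq nat :=
  crit_chain beta (carrel_lo lam i) (carrel_hi n lam i) (carrel_hi n lam i).

(* x(i): smallest critical index in the carrel of i with x(i) >= i *)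
Definition xidx (n : nat) (lam beta : nat -> nat) (i : nat) : nat :=
  last (carrel_hi n lam i) [seq x <- crit_indices n lam beta i | i <= x].

Definition platform (n : nat) (lam beta : nat -> nat) (i : nat) : nat :=
  beta (xidx n lam beta i).

Definition in_UBP (n : nat) (lam beta : nat -> nat) : Prop :=
  forall i, 1 <= i <= n -> beta i <= platform n lam beta i.

(* lattice paths: points (a,b), a >= 0, b >= 1; steps east or south *)
Definition lstep (p q : nat * nat) : bool :=
  ((q.1 == p.1.+1) && (q.2 == p.2)) || ((q.1 == p.1) && (q.2 == p.2.+1)).

Definition lattice_path (s e : nat * nat) (P : seq (nat * nat)) : Prop :=
  exists t, P = s :: t /\ path lstep s t /\ last s t = e /\ all (fun p => 0 < p.2) P.

Definition terminal (n : nat) (lam beta : nat -> nat) (m : nat) : nat * nat :=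
  (lam m + n - m, beta m).

Definition is_perm (n : nat) (pi : nat -> nat) : Prop :=
  (forall m, 1 <= m <= n -> 1 <= pi m <= n) /\
  (forall m m', 1 <= m <= n -> 1 <= m' <= n -> pi m = pi m' -> m = m').

Definition in_LD (n : nat) (lam beta pi : nat -> nat)
    (Lam : nat -> seq (nat * nat)) : Prop :=
  (forall m, 1 <= m <= n -> lattice_path (n - m, m) (terminal n lam beta (pi m)) (Lam m)) /\
  (forall m m', 1 <= m <= n -> 1 <= m' <= n -> m <> m' ->
     forall p, p \in Lam m -> p \notin Lam m').

(* Main.v *)
Require Import Defs.
From mathcomp Require Import all_boot.
From mathcomp Require Import zify.
From Stdlib Require Import Classical.
Set Implicit Arguments. Unset Strict Implicit. Unset Printing Implicit Defensive.

Fixpoint east (p : nat * nat) (k : nat) : seq (nat * nat) :=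
  if k is k'.+1 then (p.1.+1, p.2) :: east (p.1.+1, p.2) k' else [::].
Fixpoint south (p : nat * nat) (k : nat) : seq (nat * nat) :=
  if k is k'.+1 then (p.1, p.2.+1) :: south (p.1, p.2.+1) k' else [::].

Lemma east_path p k : path lstep p (east p k).
Proof.
elim: k p => [|k IH] [a b] //=.
by rewrite IH /lstep /= !eqxx.
Qed.
Lemma south_path p k : path lstep p (south p k).
Proof.
elim: k p => [|k IH] [a b] //=.
by rewrite IH /lstep /= !eqxx orbT.
Qed.
Lemma east_last p k : last p (east p k) = (p.1 + k, p.2).
Proof.
elim: k p => [|k IH] [a b] /=; first by rewrite addn0.
by rewrite IH /= addSnnS.
Qed.
Lemma south_last p k : last p (south p k) = (p.1, p.2 + k).
Proof.
elim: k p => [|k IH] [a b] /=; first by rewrite addn0.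
by rewrite IH /= addSnnS.
Qed.
Lemma mem_east p k q : q \in east p k -> q.2 = p.2 /\ p.1 < q.1 <= p.1 + k.
Proof.
elim: k p => [|k IH] [a b] //=.
rewrite inE => /orP [/eqP -> /=|/IH /= [-> H]]; first by lia.
split => //; lia.
Qed.
Lemma mem_south p k q : q \in south p k -> q.1 = p.1 /\ p.2 < q.2 <= p.2 + k.
Proof.
elim: k p => [|k IH] [a b] //=.
rewrite inE => /orP [/eqP -> /=|/IH /= [-> H]]; first by lia.
split => //; lia.
Qed.

Definition stair (a r b1 r2 b2 r3 : nat) : seq (nat * nat) :=
  (a, r) :: (east (a, r) (b1 - a) ++ south (b1, r) (r2 - r)
             ++ east (b1, r2) (b2 - b1) ++ south (b2, r2) (r3 - r2)).

Lemma mem_stair a r b1 r2 b2 r3 q :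
  a <= b1 -> b1 <= b2 -> r <= r2 -> r2 <= r3 ->
  q \in stair a r b1 r2 b2 r3 ->
  (q.2 = r /\ a <= q.1 <= b1) \/ (q.1 = b1 /\ r <= q.2 <= r2) \/
  (q.2 = r2 /\ b1 <= q.1 <= b2) \/ (q.1 = b2 /\ r2 <= q.2 <= r3).
Proof.
move=> H1 H2 H3 H4; rewrite inE !mem_cat.
case/orP => [/eqP -> /=|]; first by lia.
case/orP => [/mem_east /= ?|]; first by lia.
case/orP => [/mem_south /= ?|]; first by lia.
case/orP => [/mem_east /= ?|/mem_south /= ?]; lia.
Qed.

Lemma stair_lp a r b1 r2 b2 r3 :
  a <= b1 -> b1 <= b2 -> r <= r2 -> r2 <= r3 -> 0 < r ->
  lattice_path (a, r) (b2, r3) (stair a r b1 r2 b2 r3).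
Proof.
move=> H1 H2 H3 H4 H5.
exists (east (a, r) (b1 - a) ++ south (b1, r) (r2 - r)
             ++ east (b1, r2) (b2 - b1) ++ south (b2, r2) (r3 - r2)).
split => //; split; last split.
- rewrite !cat_path ?last_cat east_path east_last /=.
  have -> : a + (b1 - a) = b1 by lia.
  rewrite south_path south_last /=.
  have -> : r + (r2 - r) = r2 by lia.
  by rewrite east_path east_last /= (_ : b1 + (b2 - b1) = b2) ?south_path //; lia.
- rewrite !last_cat east_last /= (_ : a + (b1 - a) = b1); last lia.
  rewrite south_last /= (_ : r + (r2 - r) = r2); last lia.
  rewrite east_last /= (_ : b1 + (b2 - b1) = b2); last lia.
  rewrite south_last /= (_ : r2 + (r3 - r2) = r3) //; lia.
- apply/allP => -[q1 q2] /(mem_stair H1 H2 H3 H4) /= ?; lia.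
Qed.

Lemma stair_disj n y y' b1 r2 b2 r3 b1' r2' b2' r3' q :
  y < y' -> y' <= n ->
  n - y <= b1 -> b1 <= b2 -> y <= r2 -> r2 <= r3 ->
  n - y' <= b1' -> b1' <= b2' -> y' <= r2' -> r2' <= r3' ->
  (b2' < b1 \/ (b1' < b2' /\ b2' = b1 /\ b1 < b2 /\ r2 < r2') \/ (b1' < b1 /\ r3 < r2')) ->
  q \in stair (n - y) y b1 r2 b2 r3 -> q \in stair (n - y') y' b1' r2' b2' r3' -> False.
Proof.
move=> Hy Hn H1 H2 H3 H4 H1' H2' H3' H4' C.
move=> /(mem_stair H1 H2 H3 H4) A /(mem_stair H1' H2' H3' H4') B.
case: q A B => [q1 q2] /= A B.
lia.
Qed.

Lemma carrel_hi_spec n lam i : i <= n ->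
  let r := carrel_hi n lam i in
  [/\ i <= r <= n, (forall q, i <= q < r -> ~~ (lam q.+1 < lam q)) &
      (r < n -> lam r.+1 < lam r)].
Proof.
rewrite /carrel_hi.
move: {2}(n - i) (erefl (n - i)) => k.
elim: k i => [|k IH] i Hk Hi.
- have -> : i = n by lia.
  rewrite big_geq //; split => //; [lia | move=> q; lia | lia].
- have Hin : i < n by lia.
  rewrite big_ltn_cond /=; last exact: Hin.
  have [H1 H2 H3] := IH i.+1 (ltac:(lia)) Hin.
  set r' := \big[minn/n]_(i.+1 <= j < n | lam j.+1 < lam j) j in H1 H2 H3 *.
  case: ifP => HP.
  + have -> : minn i r' = i by lia.
    split => //; [lia | move=> q; lia].
  + split; [lia | | by []].
    move=> q Hq; case: (ltnP i q) => Hiq; first by apply: H2; lia.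
    have -> : q = i by lia.
    by rewrite HP.
Qed.

Lemma path_leq_last x0 s : path leq x0 s -> forall z, z \in x0 :: s -> z <= last x0 s.
Proof.
elim: s x0 => [|a s IH] x0 /=.
- by move=> _ z; rewrite inE => /eqP ->.
- case/andP => Ha Hp z; rewrite inE => /orP [/eqP ->|Hz].
  + have := IH a Hp a (mem_head _ _); lia.
  + exact: IH.
Qed.

Lemma next_crit_spec (beta : nat -> nat) lo y x :
  next_crit beta lo y = Some x ->
  [/\ lo < x < y, beta x + (y - x) < beta y &
      forall z, x < z < y -> beta y <= beta z + (y - z)].
Proof.
rewrite /next_crit.
set P := fun x => beta x + (y - x) < beta y.
set c := iota lo.+1 (y - lo.+1).
case: ifP => // Hh [<-].
have : [seq x <- c | P x] != [::].
  by rewrite -size_eq0 size_filter -lt0n -has_count.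
case Ef: [seq x <- c | P x] => [|l0 t] // _ /=.
have Hs : sorted leq [seq x <- c | P x] by apply: sorted_filter; [exact: leq_trans | exact: iota_sorted].
rewrite Ef /= in Hs.
have Hl : last l0 t \in [seq x <- c | P x] by rewrite Ef mem_last.
rewrite mem_filter mem_iota in Hl.
case/andP: Hl => HPl Hc.
split; [lia | exact: HPl |].
move=> z Hz.
case: (boolP (P z)) => HPz; last by rewrite /P in HPz; lia.
have : z \in [seq x <- c | P x] by rewrite mem_filter HPz mem_iota; lia.
rewrite Ef => /(path_leq_last Hs); lia.
Qed.

Definition Qc (beta : nat -> nat) x y := forall z, x < z <= y -> beta x + z < beta z + x.

Lemma crit_chain_spec beta lo f y x :
  x \in crit_chain beta lo y f -> x <= y /\ Qc beta x y.
Proof.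
elim: f y => [|f IH] y /=.
- rewrite inE => /eqP ->; split => // z; lia.
- rewrite inE => /orP [/eqP ->|]; first by split => // z; lia.
  case E: (next_crit beta lo y) => [x'|] //.
  move=> /IH [H1 H2].
  have [H3 H4 H5] := next_crit_spec E.
  split; first lia.
  have Hxx : beta x + x' <= beta x' + x.
    case: (ltnP x x') => Hl; first by have := H2 x'; lia.
    have -> : x = x' by lia. by [].
  move=> z Hz.
  case: (leqP z x') => Hzx; first by apply: H2; lia.
  case: (ltnP z y) => Hzy; first by have := H5 z; lia.
  have -> : z = y by lia.
  lia.
Qed.

Lemma xidx_spec n lam beta i : i <= carrel_hi n lam i ->
  let x := xidx n lam beta i in
  i <= x /\ x \in crit_indices n lam beta i.
Proof.
move=> Hi; rewrite /xidx /crit_indices.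
set h := carrel_hi n lam i in Hi *.
set ch := crit_chain _ _ _ _.
have Hch : ch = h :: behead ch by rewrite /ch; case: h {Hi ch} => //.
have : last h [seq x <- ch | i <= x] \in h :: [seq x <- ch | i <= x] by apply: mem_last.
rewrite inE => /orP [/eqP ->|].
- split => //; rewrite Hch mem_head //.
- by rewrite mem_filter => /andP [].
Qed.

Definition sgm m x h (y : nat) : nat :=
  if y < m then y else if y < x then y.+1 else if y == x then m else if y <= h then y else y.
Definition B1 n (lam : nat -> nat) m x h y :=
  if y < m then lam y + n - y else if y < x then lam y + n - y - 1
  else if y == x then lam y + n - y - 1 else if y <= h then lam y + n - y - 1 else lam y + n - y.
Definition R2 (beta : nat -> nat) m x h y :=
  if y < m then y else if y < x then y
  else if y == x then beta x + 1 else if y <= h then beta x + 1 + y - x else y.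
Definition B2 n (lam : nat -> nat) m x h y :=
  if y < m then lam y + n - y else if y < x then lam y + n - y - 1
  else if y == x then lam m + n - m else if y <= h then lam y + n - y else lam y + n - y.
Definition R3 (beta : nat -> nat) m x h y :=
  if y < m then beta y else if y < x then beta y.+1
  else if y == x then beta m else if y <= h then beta y else beta y.

Definition G n (lam beta : nat -> nat) m x h L y b1 r2 b2 r3 : Prop :=
 (y < m /\ b1 = lam y + n - y /\ b2 = b1 /\ r2 = y /\ r3 = beta y /\ L <= lam y) \/
 (m <= y /\ y < x /\ b1 = L + n - y - 1 /\ b2 = b1 /\ r2 = y /\ r3 = beta y.+1 /\ beta y.+1 <= beta x) \/
 (y = x /\ b1 = L + n - x - 1 /\ b2 = L + n - m /\ r2 = beta x + 1 /\ r3 = beta m) \/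
 (x < y /\ y <= h /\ b1 = L + n - y - 1 /\ b2 = L + n - y /\ r2 = beta x + 1 + y - x /\ r3 = beta y) \/
 (h < y /\ b1 = lam y + n - y /\ b2 = b1 /\ r2 = y /\ r3 = beta y /\ lam y < L).


Lemma classify n lam beta m x h L y :
 1 <= m -> m < x -> x <= h -> h < n -> 1 <= L ->
 (forall y, m <= y <= h -> lam y = L) ->
 (forall a b, 1 <= a <= b -> b <= n -> lam b <= lam a) ->
 (forall y, h < y <= n -> lam y < L) ->
 (forall y, 1 <= y <= n -> y <= beta y <= n) ->
 beta x < beta m ->
 (forall y, m < y < x -> beta y <= beta x) ->
 (forall y, x < y <= h -> beta x + y < beta y + x) ->
 1 <= y <= n ->
 [/\ n - y <= B1 n lam m x h y <= B2 n lam m x h y,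
     y <= R2 beta m x h y <= R3 beta m x h y,
     (B2 n lam m x h y, R3 beta m x h y) = terminal n lam beta (sgm m x h y) &
     G n lam beta m x h L y (B1 n lam m x h y) (R2 beta m x h y) (B2 n lam m x h y) (R3 beta m x h y)].
Proof.
move=> Hm Hmx Hxh Hhn HL Hlam Hmono Hhi Hup Hbm Hmid Hq Hy.
rewrite /B1 /R2 /B2 /R3 /sgm /G /terminal.
have Hlm := Hlam m (ltac:(lia)).
have Hlx := Hlam x (ltac:(lia)).
have Hux := Hup x (ltac:(lia)).
have Hum := Hup m (ltac:(lia)).
have Huy := Hup y Hy.
case: (ltnP y m) => H1.
  have := Hmono y m (ltac:(lia)) (ltac:(lia)).
  move=> ?; split; [lia | lia | done | left; lia].
case: (ltnP y x) => H2.
  have Hly := Hlam y (ltac:(lia)).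
  have Hly1 := Hlam y.+1 (ltac:(lia)).
  have Hu1 := Hup y.+1 (ltac:(lia)).
  have Hb1 : beta y.+1 <= beta x.
    case: (ltnP y.+1 x) => ?; first by apply: Hmid; lia.
    by have -> : y.+1 = x by lia.
  split; [lia | lia | congr (_, _); lia | right; left; lia].
have [E|Hne] := eqVneq y x.
  subst y; rewrite ?eqxx.
  split; [lia | lia | done | do 2 right; left; lia].

case: (leqP y h) => H3.
  have Hly := Hlam y (ltac:(lia)).
  have := Hq y (ltac:(lia)) => ?.
  split; [lia | lia | done | do 3 right; left; lia].
have := Hhi y (ltac:(lia)) => ?.
split; [lia | lia | done | do 4 right; lia].
Qed.

Lemma G_pair n lam beta m x h L y y' b1 r2 b2 r3 b1' r2' b2' r3' :
 1 <= m -> m < x -> x <= h -> h < n -> 1 <= L -> x <= beta x -> beta x < beta m ->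
 1 <= y -> y < y' -> y' <= n -> lam y' <= lam y ->
 G n lam beta m x h L y b1 r2 b2 r3 -> G n lam beta m x h L y' b1' r2' b2' r3' ->
 (b2' < b1 \/ (b1' < b2' /\ b2' = b1 /\ b1 < b2 /\ r2 < r2') \/ (b1' < b1 /\ r3 < r2')).
Proof.
move=> *.
repeat match goal with H : G _ _ _ _ _ _ _ _ _ _ _ _ |- _ => move: H end.
move=> Gy' Gy.
case: Gy => [Gy|[Gy|[Gy|[Gy|Gy]]]]; case: Gy' => [Gy'|[Gy'|[Gy'|[Gy'|Gy']]]]; lia.
Qed.

Lemma construct n lam beta m x h L :
 1 <= m -> m < x -> x <= h -> h < n -> 1 <= L ->
 (forall y, m <= y <= h -> lam y = L) ->
 (forall a b, 1 <= a <= b -> b <= n -> lam b <= lam a) ->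
 (forall y, h < y <= n -> lam y < L) ->
 (forall y, 1 <= y <= n -> y <= beta y <= n) ->
 beta x < beta m ->
 (forall y, m < y < x -> beta y <= beta x) ->
 (forall y, x < y <= h -> beta x + y < beta y + x) ->
  exists pi : nat -> nat,
    [/\ is_perm n pi,
        (exists m, 1 <= m <= n /\ pi m <> m) &
        exists Lam, in_LD n lam beta pi Lam].
Proof.
move=> Hm Hmx Hxh Hhn HL Hlam Hmono Hhi Hup Hbm Hmid Hq.
have Hcl := classify Hm Hmx Hxh Hhn HL Hlam Hmono Hhi Hup Hbm Hmid Hq.
have Hux := Hup x (ltac:(lia)).
exists (sgm m x h); split.
- split.
  + move=> k Hk; rewrite /sgm.
    case: (ltnP k m) => ?; first lia. case: (ltnP k x) => ?; first lia.
    case: (k =P x) => ?; first lia. case: (leqP k h) => ?; lia.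
  + move=> k k' Hk Hk'; rewrite /sgm.
    case: (ltnP k m) => ?; case: (ltnP k x) => ?; case: (k =P x) => ?;
    case: (ltnP k' m) => ?; case: (ltnP k' x) => ?; case: (k' =P x) => ?;
    rewrite ?if_same; lia.
- exists x; split; first lia.
  rewrite /sgm ltnn; case: (ltnP x m) => ?; first lia.
  rewrite eqxx; lia.
- exists (fun y => stair (n - y) y (B1 n lam m x h y) (R2 beta m x h y)
                    (B2 n lam m x h y) (R3 beta m x h y)).
  split.
  + move=> k Hk.
    have [/andP [H1 H2] /andP [H3 H4] E _] := Hcl k Hk.
    rewrite -E; apply: stair_lp => //; lia.
  + move=> k k' Hk Hk' Hne p Hp; apply/negP => Hp'.
    have [/andP [H1 H2] /andP [H3 H4] _ G1] := Hcl k Hk.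
    have [/andP [H1' H2'] /andP [H3' H4'] _ G2] := Hcl k' Hk'.
    case: (ltngtP k k') => Hkk; last by [].
    * apply: (stair_disj Hkk _ H1 H2 H3 H4 H1' H2' H3' H4' _ Hp Hp'); first lia.
      apply: (G_pair _ _ _ _ _ _ _ _ Hkk _ _ G1 G2); try lia.
      apply: Hmono; lia.
    * apply: (stair_disj Hkk _ H1' H2' H3' H4' H1 H2 H3 H4 _ Hp' Hp); first lia.
      apply: (G_pair _ _ _ _ _ _ _ _ Hkk _ _ G2 G1); try lia.
      apply: Hmono; lia.
Qed.

Lemma ex_last (P : pred nat) i d : P i -> i <= d ->
  exists m, [/\ i <= m <= d, P m & forall y, m < y <= d -> ~~ P y].
Proof.
move=> Hi; elim: d => [|d IH] Hd.
- exists i; split => //; [lia | move=> y; lia].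
- case: (boolP (P d.+1)) => Hp.
  + exists d.+1; split => //; [lia | move=> y; lia].
  + have Hid : i <= d.
      case: (ltnP d i) => // Hdi.
      have E : d.+1 = i by lia.
      by rewrite E Hi in Hp.
    have [m [H1 H2 H3]] := IH Hid.
    exists m; split => //; first lia.
    move=> y Hy; case: (ltnP y d.+1) => ?; first by apply: H3; lia.
    by have -> : y = d.+1 by lia.
Qed.

Lemma part_mono n lam : is_partition n lam ->
  forall a b, 1 <= a <= b -> b <= n -> lam b <= lam a.
Proof.
move=> Hp a; elim=> [|b IH] Hab Hbn; first lia.
case: (ltnP a b.+1) => H; last by have -> : a = b.+1 by lia.
have := IH (ltac:(lia)) (ltac:(lia)).
have := Hp b (ltac:(lia)) (ltac:(lia)); lia.
Qed.

Theorem lemma6p1 (n : nat) (lam beta : nat -> nat) :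
  1 <= n ->
  is_partition n lam ->
  upper_tuple n beta ->
  ~ in_UBP n lam beta ->
  exists pi : nat -> nat,
    [/\ is_perm n pi,
        (exists m, 1 <= m <= n /\ pi m <> m) &
        exists Lam, in_LD n lam beta pi Lam].
Proof.
move=> Hn Hpart Hup HU.
have [i [Hi Hb]] : exists i, 1 <= i <= n /\ platform n lam beta i < beta i.
  apply: NNPP => Hne; apply: HU => i Hi; rewrite leqNgt; apply/negP => Hlt.
  by apply: Hne; exists i.
have Hup' : forall y, 1 <= y <= n -> y <= beta y <= n.
  by move=> y Hy; have [? ?] := Hup y Hy; lia.
have Hmono := part_mono Hpart.
have [Hih Hnd Hd] := carrel_hi_spec lam (ltac:(lia) : i <= n).
set h := carrel_hi n lam i in Hih Hnd Hd.
have [Hix Hxc] := xidx_spec beta (ltac:(lia) : i <= carrel_hi n lam i).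
set x := xidx n lam beta i in Hix Hxc.
have [Hxh Hq] := crit_chain_spec Hxc.
rewrite /platform -/x in Hb.
have Hix' : i < x.
  case: (ltnP i x) => // Hxi.
  have E : i = x by lia.
  rewrite E in Hb; lia.
have [m [Hm1 Hm2 Hm3]] := @ex_last (fun y => beta x < beta y) i x.-1 Hb (ltac:(lia)).
simpl in Hm2.
have Hhn : h < n.
  case: (ltnP h n) => // Hhn.
  have Hh : h = n by lia.
  have Hux := Hup' x (ltac:(lia)).
  have Hum := Hup' m (ltac:(lia)).
  case: (ltnP x h) => Hxh'.
  - have := Hq h (ltac:(lia)); have := Hup' h (ltac:(lia)); lia.
  - have Hxn : x = n by lia.
    rewrite Hxn in Hm2 Hux; lia.
have Hconst : forall y, i <= y <= h -> lam y = lam h.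
  move=> y; move: {2}(h - y) (erefl (h - y)) => k.
  elim: k y => [|k IH] y Hk Hy; first by have -> : y = h by lia.
  rewrite -(IH y.+1 (ltac:(lia)) (ltac:(lia))).
  have := Hnd y (ltac:(lia)); have := Hpart y (ltac:(lia)) (ltac:(lia)); lia.
have Hdh := Hd Hhn.
apply: (@construct n lam beta m x h (lam h)).
- lia.
- lia.
- exact: Hxh.
- exact: Hhn.
- lia.
- move=> y Hy; apply: Hconst; lia.
- exact: Hmono.
- move=> y Hy; have := Hmono h.+1 y (ltac:(lia)) (ltac:(lia)); lia.
- exact: Hup'.
- exact: Hm2.
- move=> y Hy; have := Hm3 y (ltac:(lia)); rewrite /= -leqNgt //.
- move=> y Hy; exact: Hq.
Qed.
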